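(* Let $\mathbf{M}=(\mathcal{S},s_I,\mathcal{A},P,\mathcal{Z},O,R)$ be a POMDP and let $\mathbf{M}_{fo}$ be its corresponding fully observable MDP. Then for every finite $N\in\mathbb{N}$, \[ \sup_{\pi \in \Pi(\mathbf{M})}H^{\pi}(S_1, S_2,\ldots, S_N)\;\leq\; \sup_{\pi \in \Pi(\mathbf{M}_{fo})}H^{\pi}(S_1, S_2,\ldots, S_N). \]
   Context: A POMDP is a tuple $\mathbf{M}=(\mathcal{S},s_I,\mathcal{A},P,\mathcal{Z},O,R)$ where $\mathcal{S}$ is a finite set of states, $s_I\in\mathcal{S}$ is the unique initial state, $\mathcal{A}$ is a finite set of actions (all available in every state), $P:\mathcal{S}\times\mathcal{A}\to\Delta(\mathcal{S})$ is a transition function (write $P_{s,a,s'}=P(s'|s,a)$), $\mathcal{Z}$ is a finite set of observations, $O:\mathcal{S}\to\Delta(\mathcal{Z})$ is an observation function (write $O_{s,z}=O(z|s)$), and $R:\mathcal{S}\times\mathcal{A}\to\mathbb{R}$ is a reward function. An observation history of length $t$ is a sequence $(z_1,a_1,z_2,a_2,\ldots,z_t)$ of observations and actions. A controller $\pi$ is a map from observation histories of all lengths to probability distributions over $\mathcal{A}$; $\Pi(\mathbf{M})$ denotes the set of all controllers. A controller $\pi$ induces a stochastic process as follows: $S_1=s_I$; at each time $t$ an observation $Z_t$ is drawn from $O(\cdot|S_t)$, an action $A_t$ is drawn from $\pi(\cdot\mid Z_1,A_1,\ldots,Z_t)$, and $S_{t+1}$ is drawn from $P(\cdot|S_t,A_t)$.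 $H^{\pi}(S_1,\ldots,S_N)$ denotes the joint Shannon entropy of $(S_1,\ldots,S_N)$ under this process (convention $0\log 0=0$). The corresponding fully observable MDP $\mathbf{M}_{fo}$ is obtained from $\mathbf{M}$ by setting $\mathcal{Z}=\mathcal{S}$ and $O_{s,s}=1$ for all $s\in\mathcal{S}$ (so its controllers may depend on the full state–action history). *)

(* Defs.v *)
From HB Require Import structures.
From mathcomp Require Import all_boot all_order all_algebra.
From mathcomp Require Import all_classical all_reals.
From mathcomp Require Import exp.
Set Implicit Arguments. Unset Strict Implicit. Unset Printing Implicit Defensive.
Import Order.TTheory GRing.Theory Num.Theory.
Local Open Scope ring_scope.

Record pomdp (R : realType) (S A Z : finType) := Pomdp {
  sI : S;
  trans : S -> A -> S -> R;        (* trans s a s' = P(s' | s, a) *)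
  obs : S -> Z -> R;               (* obs s z = O(z | s) *)
  rew : S -> A -> R;
  trans_ge0 : forall s a s', 0 <= trans s a s';
  trans_sum1 : forall s a, \sum_(s' : S) trans s a s' = 1;
  obs_ge0 : forall s z, 0 <= obs s z;
  obs_sum1 : forall s, \sum_(z : Z) obs s z = 1 }.

(* A controller: pi h z a = probability of action a after history
   h = [(z_1,a_1);...;(z_{t-1},a_{t-1})] and current observation z = z_t. *)
Definition controller (R : realType) (A Z : finType) := seq (Z * A) -> Z -> A -> R.

Definition is_controller (R : realType) (A Z : finType) (pi : controller R A Z) :=
  (forall h z a, 0 <= pi h z a) /\ (forall h z, \sum_(a : A) pi h z a = 1).

(* Probability that, being in state s with history h, the next states are
   exactly the sequence ss (marginalising over observations and actions). *)
Fixpoint path_prob (R : realType) (S A Z : finType) (M : pomdp R S A Z)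
  (pi : controller R A Z) (h : seq (Z * A)) (s : S) (ss : seq S) : R :=
  match ss with
  | [::] => 1
  | s' :: ss' => \sum_(z : Z) \sum_(a : A)
      obs M s z * pi h z a * trans M s a s' * path_prob M pi (rcons h (z, a)) s' ss'
  end.

Definition state_law (R : realType) (S A Z : finType) (M : pomdp R S A Z)
  (pi : controller R A Z) (N : nat) (ss : N.-tuple S) : R :=
  match tval ss with
  | [::] => 1
  | s1 :: rest => (s1 == sI M)%:R * path_prob M pi [::] (sI M) rest
  end.

Definition entropy (R : realType) (T : finType) (p : T -> R) : R :=
  - \sum_(x : T) (if p x == 0 then 0 else p x * ln (p x)).

Definition state_entropy (R : realType) (S A Z : finType) (M : pomdp R S A Z)
  (pi : controller R A Z) (N : nat) : R :=
  entropy (state_law M pi (N := N)).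

(* The fully observable MDP M_fo: Z = S, O(s|s) = 1. *)
Lemma fo_obs_ge0 (R : realType) (S : finType) (s s' : S) : 0 <= ((s == s')%:R : R).
Proof. by case: (s == s'). Qed.

Lemma fo_obs_sum1 (R : realType) (S : finType) (s : S) :
  \sum_(s' : S) ((s == s')%:R : R) = 1.
Proof.
rewrite (bigD1 s) //= eqxx big1 ?addr0 // => s' /negbTE.
by rewrite eq_sym => ->.
Qed.

Definition fully_observable (R : realType) (S A Z : finType)
  (M : pomdp R S A Z) : pomdp R S A S :=
  @Pomdp R S A S (sI M) (trans M) (fun s s' => (s == s')%:R) (rew M)
    (@trans_ge0 _ _ _ _ M) (@trans_sum1 _ _ _ _ M)
    (@fo_obs_ge0 R S) (@fo_obs_sum1 R S).

Definition sup_entropy (R : realType) (S A Z : finType) (M : pomdp R S A Z)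
  (N : nat) : R :=
  sup [set x | exists pi : controller R A Z,
                 is_controller pi /\ x = state_entropy M pi N]%classic.

(* Main.v *)
Require Import Defs.
From mathcomp Require Import all_boot all_order all_algebra.
From mathcomp Require Import all_classical all_reals exp.
Set Implicit Arguments. Unset Strict Implicit. Unset Printing Implicit Defensive.
Import Order.TTheory GRing.Theory Num.Theory.
Local Open Scope ring_scope.

Section HS.
Variables (R : realType) (S A Z : finType) (M : pomdp R S A Z) (pi : controller R A Z).

Fixpoint HS (pre : seq (Z * A)) (s : S) (xs : seq S) (f : seq (Z * A) -> R) : R :=
  match xs with
  | [::] => f pre
  | s' :: xs' => \sum_(z : Z) \sum_(a : A)
      obs M s z * pi pre z a * trans M s a s' * HS (rcons pre (z, a)) s' xs' f
  end.

Lemma path_probE pre s ss : path_prob M pi pre s ss = HS pre s ss (fun _ => 1).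
Proof.
elim: ss pre s => [|s' ss IH] pre s //=.
by apply: eq_bigr => z _; apply: eq_bigr => a _; rewrite IH.
Qed.

Lemma HS_ext pre s xs f g : (forall h, f h = g h) -> HS pre s xs f = HS pre s xs g.
Proof.
move=> fg; elim: xs pre s => [|s' xs IH] pre s //=.
by apply: eq_bigr => z _; apply: eq_bigr => a _; rewrite IH.
Qed.

Lemma HS_rcons pre s xs s' f :
  HS pre s (rcons xs s') f = HS pre s xs (fun h => \sum_(z : Z) \sum_(a : A)
    obs M (last s xs) z * pi h z a * trans M (last s xs) a s' * f (rcons h (z, a))).
Proof.
elim: xs pre s => [|x xs IH] pre s //=.
by apply: eq_bigr => z _; apply: eq_bigr => a _; rewrite IH.
Qed.

Lemma HS_sum pre s xs (F : A -> seq (Z * A) -> R) :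
  HS pre s xs (fun h => \sum_(i : A) F i h) = \sum_(i : A) HS pre s xs (F i).
Proof.
elim: xs pre s => [|s' xs IH] pre s //=.
apply/esym; rewrite exchange_big; apply: eq_bigr => z _.
rewrite exchange_big; apply: eq_bigr => a _.
by rewrite IH mulr_sumr.
Qed.

Lemma HS_scal pre s xs c f :
  HS pre s xs (fun h => c * f h) = c * HS pre s xs f.
Proof.
elim: xs pre s => [|s' xs IH] pre s //=.
rewrite mulr_sumr; apply: eq_bigr => z _.
rewrite mulr_sumr; apply: eq_bigr => a _.
by rewrite IH mulrCA.
Qed.

Hypothesis pi_ge0 : forall h z a, 0 <= pi h z a.

Lemma HS_le pre s xs f g : (forall h, f h <= g h) -> HS pre s xs f <= HS pre s xs g.
Proof.
move=> fg; elim: xs pre s => [|s' xs IH] pre s //=.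
apply: ler_sum => z _; apply: ler_sum => a _.
apply: ler_wpM2l => //.
by rewrite !mulr_ge0 // ?obs_ge0 ?trans_ge0.
Qed.

Lemma HS_ge0 pre s xs f : (forall h, 0 <= f h) -> 0 <= HS pre s xs f.
Proof.
move=> f0; have := @HS_le pre s xs (fun _ => 0) f f0.
by rewrite (HS_ext _ _ _ (g := fun h => 0 * 0)) ?HS_scal ?mul0r // => h; rewrite mul0r.
Qed.


Section Construct.
Hypothesis pi_sum1 : forall h z, \sum_(a : A) pi h z a = 1.
Variable a0 : A.

Let s0 := sI M.
Definition Pw xs := HS [::] s0 xs (fun _ => 1).
Definition Dw xs a := HS [::] s0 xs (fun h => \sum_(z : Z) obs M (last s0 xs) z * pi h z a).
Definition Cw xs a := if Pw xs == 0 then ((a0 == a)%:R : R) else Dw xs a / Pw xs.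
Definition pif : controller R A S := fun hfo s a => Cw (behead (rcons (map fst hfo) s)) a.

Fixpoint Q xs s ss : R :=
  match ss with
  | [::] => 1
  | s' :: ss' => \sum_(a : A) Cw xs a * trans M s a s' * Q (rcons xs s') s' ss'
  end.

Lemma Dw_ge0 xs a : 0 <= Dw xs a.
Proof.
apply: HS_ge0 => h; apply: sumr_ge0 => z _; exact: mulr_ge0 (obs_ge0 _ _ _) (pi_ge0 _ _ _).
Qed.

Lemma Pw_ge0 xs : 0 <= Pw xs.
Proof. by apply: HS_ge0. Qed.

Lemma sumDw xs : \sum_(a : A) Dw xs a = Pw xs.
Proof.
rewrite /Dw -HS_sum; apply: HS_ext => h.
rewrite exchange_big /=; rewrite -(obs_sum1 M (last s0 xs)).
by apply: eq_bigr => z _; rewrite -mulr_sumr pi_sum1 mulr1.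
Qed.

Lemma PC xs a : Pw xs * Cw xs a = Dw xs a.
Proof.
rewrite /Cw; case: eqP => [P0|/eqP P0]; last by rewrite mulrC divfK.
rewrite P0 mul0r; apply/esym.
move: P0; rewrite -(sumDw xs) => /psumr_eq0P H; apply: H => // i _; exact: Dw_ge0.
Qed.

Lemma pif_controller : is_controller pif.
Proof.
split=> [h z a|h z]; rewrite /pif /Cw.
  case: eqP => _; first by case: (a0 == a).
  by apply: divr_ge0; [apply: Dw_ge0 | apply: Pw_ge0].
case: eqP => [_|/eqP P0]; first exact: fo_obs_sum1.
by rewrite -mulr_suml sumDw divff.
Qed.

Lemma behead_rcons2 (l : seq S) x y : behead (rcons (rcons l x) y) = rcons (behead (rcons l x)) y.
Proof. by case: l. Qed.

Lemma fo_path hfo s ss :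
  path_prob (fully_observable M) pif hfo s ss = Q (behead (rcons (map fst hfo) s)) s ss.
Proof.
elim: ss hfo s => [|s' ss IH] hfo s //=.
rewrite (bigD1 s) //= [X in _ + X = _]big1 ?addr0; last first.
  move=> z Hz; have -> : (s == z) = false by apply/negbTE; rewrite eq_sym; move: Hz; case: (z != s).
  by rewrite big1 // => a _; rewrite !mul0r.
apply: eq_bigr => a _; rewrite eqxx mul1r IH map_rcons /= behead_rcons2.
by [].
Qed.

Lemma Pw_rcons xs s' : Pw (rcons xs s') = \sum_(a : A) Dw xs a * trans M (last s0 xs) a s'.
Proof.
rewrite /Pw HS_rcons.
rewrite (HS_ext _ _ _ (g := fun h => \sum_(a : A) trans M (last s0 xs) a s' *
   (\sum_(z : Z) obs M (last s0 xs) z * pi h z a))); last first.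
  move=> h; rewrite exchange_big /=; apply: eq_bigr => a _.
  by rewrite mulr_sumr; apply: eq_bigr => z _; rewrite mulr1 mulrC.
rewrite HS_sum; apply: eq_bigr => a _; by rewrite HS_scal mulrC.
Qed.

Lemma main_eq ss xs :
  HS [::] s0 xs (fun h => HS h (last s0 xs) ss (fun _ => 1)) = Pw xs * Q xs (last s0 xs) ss.
Proof.
elim: ss xs => [|s' ss IH] xs /=; first by rewrite mulr1.
have := IH (rcons xs s'); rewrite last_rcons => IH'.
rewrite -(HS_rcons [::] s0 xs s' (fun h => HS h s' ss (fun _ => 1))) IH' Pw_rcons.
rewrite mulr_suml mulr_sumr; apply: eq_bigr => a _.
by rewrite !mulrA PC.
Qed.

Lemma path_eq ss : path_prob M pi [::] s0 ss = path_prob (fully_observable M) pif [::] s0 ss.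
Proof.
rewrite fo_path /= path_probE.
have := main_eq ss [::]; rewrite /= => ->.
by rewrite /Pw /= mul1r.
Qed.

End Construct.
End HS.

Lemma entropy_le (R : realType) (T : finType) (p : T -> R) :
  (forall x, 0 <= p x) -> entropy p <= #|T|%:R.
Proof.
move=> p0; rewrite /entropy -sumrN.
have -> : (#|T|%:R : R) = \sum_(x : T) 1 by rewrite sumr_const.
apply: ler_sum => x _; case: eqP => [_|/eqP px]; first by rewrite oppr0.
have pp : 0 < p x by rewrite lt0r px p0.
have ip : 0 < (p x)^-1 by rewrite invr_gt0.
rewrite -mulrN -lnV ?posrE //.
apply: ltW; rewrite -[X in _ < X](divff px) ltr_pM2l //; exact: ln_sublinear.
Qed.

Lemma law_ge0 (R : realType) (S A Z : finType) (M : pomdp R S A Z) (pi : controller R A Z) N ss :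
  is_controller pi -> 0 <= state_law M pi (N := N) ss.
Proof.
move=> [pi0 _]; rewrite /state_law; case: (tval ss) => // s1 rest.
by apply: mulr_ge0; [case: (_ == _) | rewrite path_probE; apply: HS_ge0].
Qed.

Lemma no_ctrl (R : realType) (S A Z : finType) (M : pomdp R S A Z) (pi : controller R A Z) :
  is_controller pi -> ((fun _ : A => true) =1 xpred0) -> False.
Proof.
move=> [_ pi1] noA.
have : (1 : R) = 0.
  rewrite -(obs_sum1 M (sI M)) big1 // => z _.
  have := pi1 [::] z; rewrite big_pred0 //.
  by move=> /esym/eqP; rewrite oner_eq0.
by move/eqP; rewrite oner_eq0.
Qed.

Theorem theorem1 (R : realType) (S A Z : finType) (M : pomdp R S A Z) (N : nat) :
  sup_entropy M N <= sup_entropy (fully_observable M) N.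
Proof.
rewrite /sup_entropy.
case: (pickP (fun _ : A => true)) => [a0 _|noA]; last first.
  have E0 (S' Z' : finType) (M' : pomdp R S' A Z') :
    [set x | exists pi : controller R A Z', is_controller pi /\ x = state_entropy M' pi N]%classic = set0%classic.
    by apply/seteqP; split => x //= [pi [Hpi _]]; case: (no_ctrl M' Hpi noA).
  by rewrite !E0 lexx.
have cst (S' Z' : finType) : is_controller (fun (_ : seq (Z' * A)) (_ : Z') (a : A) => ((a0 == a)%:R : R)).
  by split => [h z a|h z]; [case: (a0 == a) | exact: fo_obs_sum1].
apply: sup_le.
- move=> x [pi [Hpi ->]]; apply/downP.
  have Hc := Hpi; case: Hc => p0 p1.
  have Heq : state_entropy M pi N = state_entropy (fully_observable M) (pif M pi a0) N.
    rewrite /state_entropy /entropy; congr (- _); apply: eq_bigr => ss _.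
    have -> // : state_law M pi (N:=N) ss = state_law (fully_observable M) (pif M pi a0) (N:=N) ss.
    rewrite /state_law; case: (tval ss) => //= s1 rest.
    by rewrite (path_eq M p0 p1 a0).
  exists (state_entropy (fully_observable M) (pif M pi a0) N); last by rewrite Heq.
  by exists (pif M pi a0); split => //; apply: pif_controller.
- exists (state_entropy M (fun _ _ a => ((a0 == a)%:R : R)) N); exists (fun _ _ a => ((a0 == a)%:R : R)); split => //; exact: cst.
- split.
    exists (state_entropy (fully_observable M) (fun _ _ a => ((a0 == a)%:R : R)) N); exists (fun _ _ a => ((a0 == a)%:R : R)); split => //; exact: cst.
  exists (#|{: N.-tuple S}|%:R) => x [pi [Hpi ->]].
  by apply: entropy_le => ss; apply: law_ge0.
Qed.
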